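(* Every three-dimensional empirical copula is simplified.
   Context: $\mathbb{I}=[0,1]$, $\lambda$ Lebesgue measure; points of $\mathbb{I}^3$ are written $(\mathbf{u},v)$, $\mathbf{u}=(u_1,u_2)$. The (three-dimensional) empirical copula of a sample $(\mathbf{X}_1,Y_1),\dots,(\mathbf{X}_n,Y_n)$ of a random vector with continuous univariate marginals and without ties is the copula obtained by trilinear interpolation of the empirical subcopula; equivalently, there are permutations $\sigma_1,\sigma_2$ of $\{1,\dots,n\}$ such that its density is $\hat c_n(u_1,u_2,v)=n^2\sum_{i=1}^n\mathbf{1}_{I_i^1}(u_1)\mathbf{1}_{I_i^2}(u_2)\mathbf{1}_{V_i}(v)$ with $I_i^k=((\sigma_k(i)-1)/n,\sigma_k(i)/n]$ and $V_i=((i-1)/n,i/n]$. For a three-dimensional copula $C$, its Markov kernel $K_C$ is (a version of) the regular conditional distribution of $(U_1,U_2)$ given $U_3=v$, $(U_1,U_2,U_3)\sim C$, and $F_{1|3}(u_1|t)=K_C(t,[0,u_1]\times\mathbb{I})$, $F_{2|3}(u_2|t)=K_C(t,\mathbb{I}\times[0,u_2])$. $C$ is generalized simplified if there is a bivariate copula $A$ with $C(\mathbf{u},v)=\int_{[0,v]}A(F_{1|3}(u_1|t),F_{2|3}(u_2|t))\,d\lambda(t)$ for all $(\mathbf{u},v)$; $C$ is simplified if it is generalized simplified and, for $\lambda$-a.e. $t$, the functions $F_{1|3}(\cdot|t)$ and $F_{2|3}(\cdot|t)$ are continuous. *)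

(* Defs.v *)
From HB Require Import structures.
From mathcomp Require Import all_boot all_order all_algebra all_fingroup.
From mathcomp Require Import all_classical all_reals all_analysis.
Set Implicit Arguments. Unset Strict Implicit. Unset Printing Implicit Defensive.
Import Order.TTheory GRing.Theory Num.Theory.
Import numFieldNormedType.Exports.
Local Open Scope classical_set_scope.
Local Open Scope ring_scope.

Section copulas.
Variable R : realType.
Notation lam := (@lebesgue_measure R).

Definition Icc (a b : R) : set R := `[a, b].

Definition lamR (A : set R) : R := fine (lam A).

(* [0,x] ∩ ((a-1)/n, a/n]  with 1-based a; here a is 0-based: (a/n, (a+1)/n] *)
Definition cellR (n a : nat) (x : R) : R :=
  lamR (`[0, x] `&` `]a%:R / n%:R, a.+1%:R / n%:R]).

(* The 3-dimensional empirical copula given by permutations s1, s2 of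
   {0,..,n-1} (0-based version of {1,..,n}):
   C(u1,u2,v) = int_{[0,u1]x[0,u2]x[0,v]} n^2 sum_i 1_{I_i^1} 1_{I_i^2} 1_{V_i}
              = n^2 sum_i lam([0,u1]∩I_i^1) lam([0,u2]∩I_i^2) lam([0,v]∩V_i). *)
Definition empirical_copula (n : nat) (s1 s2 : {perm 'I_n})
    (u1 u2 v : R) : R :=
  n%:R ^+ 2 * \sum_(i < n)
     (cellR n (s1 i) u1 * cellR n (s2 i) u2 * cellR n i v).

Definition copula2 (A : R -> R -> R) : Prop :=
  [/\ (forall x, 0 <= x <= 1 -> A x 0 = 0 /\ A 0 x = 0),
      (forall x, 0 <= x <= 1 -> A x 1 = x /\ A 1 x = x) &
      (forall x1 x2 y1 y2, 0 <= x1 -> x1 <= x2 -> x2 <= 1 ->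
          0 <= y1 -> y1 <= y2 -> y2 <= 1 ->
          0 <= A x2 y2 - A x2 y1 - A x1 y2 + A x1 y1)].

(* K is (a version of) the Markov kernel of the 3-dim copula C, i.e. the
   regular conditional distribution of (U1,U2) given U3 = t, characterized
   on the generating rectangles:
   P(U1 <= u1, U2 <= u2, U3 <= v) = int_{[0,v]} K(t,[0,u1]x[0,u2]) dt. *)
Definition markov_kernel_of (C : R -> R -> R -> R)
    (K : R.-pker R ~> (R * R)%type) : Prop :=
  forall u1 u2 v, 0 <= u1 <= 1 -> 0 <= u2 <= 1 -> 0 <= v <= 1 ->
    (C u1 u2 v)%:E =
      (\int[lam]_(t in Icc 0 v) K t (Icc 0 u1 `*` Icc 0 u2))%E.

Definition F13 (K : R.-pker R ~> (R * R)%type) (u1 t : R) : R :=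
  fine (K t (`[0, u1] `*` `[0, 1])).
Definition F23 (K : R.-pker R ~> (R * R)%type) (u2 t : R) : R :=
  fine (K t (`[0, 1] `*` `[0, u2])).

Definition gen_simplified_wrt (C : R -> R -> R -> R)
    (K : R.-pker R ~> (R * R)%type) : Prop :=
  exists A, copula2 A /\
    forall u1 u2 v, 0 <= u1 <= 1 -> 0 <= u2 <= 1 -> 0 <= v <= 1 ->
      (C u1 u2 v)%:E =
        (\int[lam]_(t in Icc 0 v) (A (F13 K u1 t) (F23 K u2 t))%:E)%E.

Definition simplified (C : R -> R -> R -> R) : Prop :=
  exists K : R.-pker R ~> (R * R)%type,
    [/\ markov_kernel_of C K, gen_simplified_wrt C K &
      {ae lam, forall t, 0 <= t <= 1 ->
         {within `[0, 1], continuous (fun u => F13 K u t)} /\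
         {within `[0, 1], continuous (fun u => F23 K u t)}}].

End copulas.

(* Main.v *)
Require Import Defs.
From HB Require Import structures.
From mathcomp Require Import all_boot all_order all_algebra all_fingroup.
From mathcomp Require Import all_classical all_reals all_analysis measurable_realfun.
From mathcomp Require Import ring lra.
Set Implicit Arguments. Unset Strict Implicit. Unset Printing Implicit Defensive.
Import Order.TTheory GRing.Theory Num.Theory.
Import numFieldNormedType.Exports.
Local Open Scope classical_set_scope.
Local Open Scope ring_scope.

Section S.
Context (R : realType).
Notation lam := (@lebesgue_measure R).

Definition Vset (N a : nat) : set R := `]a%:R / N%:R, a.+1%:R / N%:R].

Lemma VsetE N a t : Vset N a t = (a%:R / N%:R < t <= a.+1%:R / N%:R).
Proof. by rewrite /Vset /= in_itv. Qed.

Lemma Vset_pos N a t : Vset N a t -> 0 < t.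
Proof.
rewrite VsetE => /andP[h _]; apply: le_lt_trans h.
by rewrite divr_ge0.
Qed.

Lemma Vset_le1 N a t : (a < N)%N -> Vset N a t -> t <= 1.
Proof.
move=> aN; rewrite VsetE => /andP[_ h]; apply: (le_trans h).
have N0 : (0 < N%:R :> R) by rewrite ltr0n; case: (N) aN.
by rewrite ler_pdivrMr // mul1r ler_nat.
Qed.

Lemma Vset_disj N i j t : Vset N i t -> Vset N j t -> i = j.
Proof.
rewrite !VsetE => /andP[h1 h2] /andP[h3 h4].
have N0 : (0 < N%:R :> R).
  rewrite lt0r ler0n andbT; apply/eqP => N0.
  by move: h1 h2; rewrite N0 invr0 !mulr0 => /lt_le_trans H /H; rewrite ltxx.
have a1 := lt_le_trans h1 h4; have a2 := lt_le_trans h3 h2.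
rewrite ltr_pM2r ?invr_gt0 // ltr_nat ltnS in a1.
rewrite ltr_pM2r ?invr_gt0 // ltr_nat ltnS in a2.
by apply/eqP; rewrite eqn_leq a1 a2.
Qed.

Lemma Vset_cover N t : (0 < N)%N -> 0 < t <= 1 -> exists2 i, (i < N)%N & Vset N i t.
Proof.
move=> N0 /andP[t0 t1].
have N0' : (0 < N%:R :> R) by rewrite ltr0n.
have ex : exists k, t <= k%:R / N%:R.
  by exists N; rewrite divff // gt_eqF.
case: (ex_minnP ex) => k tk kmin.
case: k tk kmin => [|i] tk kmin.
  by move: tk; rewrite mul0r => /(lt_le_trans t0); rewrite ltxx.
exists i.
  by apply: kmin; rewrite divff // gt_eqF.
rewrite VsetE tk andbT ltNge; apply/negP => /kmin; by rewrite ltnn.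
Qed.

Lemma lam_cell (x a b : R) : 0 <= a ->
  lam (`[0, x] `&` `]a, b]) = (Num.max 0 (Num.min x b - a))%:E.
Proof.
move=> a0.
have -> : `[0, x] `&` `]a, b] = `]a, Num.min x b]%classic :> set R.
  apply/seteqP; split => t /=; rewrite !in_itv /= le_min.
    by case => /andP[_ ->] /andP[-> ->].
  case/and3P => at0 tx tb; rewrite at0 tx tb /= andbT; split => //.
  exact: (le_trans a0 (ltW at0)).
rewrite lebesgue_measure_itv /= lte_fin.
case: ifPn => h.
  by rewrite -EFinD; congr (_%:E); apply/esym/max_idPr; rewrite subr_ge0 ltW.
by congr (_%:E); apply/esym/max_idPl; rewrite subr_le0 leNgt.
Qed.

Lemma cellRE N a (x : R) : cellR N a x = Num.max 0 (Num.min x (a.+1%:R / N%:R) - a%:R / N%:R).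
Proof. by rewrite /cellR /lamR lam_cell // divr_ge0. Qed.

Lemma cellR_ge0 N a (x : R) : 0 <= cellR N a x.
Proof. by rewrite cellRE le_max lexx. Qed.

Definition lamD (A : set R) : \bar R := lam A.
Lemma lamD0 : lamD set0 = 0%E. Proof. exact: measure0. Qed.
Lemma lamD_ge0 A : (0 <= lamD A)%E. Proof. exact: measure_ge0. Qed.
Lemma lamD_sigma : semi_sigma_additive lamD.
Proof. exact: (@measure_semi_sigma_additive _ _ _ lam). Qed.
HB.instance Definition _ := isMeasure.Build _ _ _ lamD lamD0 lamD_ge0 lamD_sigma.

Lemma mVset N a : measurable (Vset N a).
Proof. exact: measurable_itv. Qed.

Section U.
Context (n a : nat).
Definition umu := mscale (n.+1%:R%:nng) (mrestr lamD (mVset n.+1 a)).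
HB.instance Definition _ := Measure.on umu.
Lemma umu_setT : umu setT = 1%E.
Proof.
rewrite /umu /mscale /= /mrestr setTI /lamD /Vset lebesgue_measure_itv /= lte_fin.
have N0 : (0 < n.+1%:R :> R) by rewrite ltr0n.
rewrite ltr_pM2r ?invr_gt0 // ltr_nat ltnSn -EFinD -EFinM; congr (_%:E).
by rewrite -mulrBl -natrB // subSnn mul1r divff // gt_eqF.
Qed.
HB.instance Definition _ := Measure_isProbability.Build _ _ _ umu umu_setT.

Lemma umu_Icc (x : R) : umu `[0, x] = (n.+1%:R * cellR n.+1 a x)%:E.
Proof.
rewrite /umu /mscale /= /mrestr /lamD /Vset lam_cell ?divr_ge0 // -cellRE.
by [].
Qed.

Lemma umu_Icc1 : (a < n.+1)%N -> umu `[0, 1] = 1%E.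
Proof.
move=> an; rewrite umu_Icc cellRE.
have N0 : (0 < n.+1%:R :> R) by rewrite ltr0n.
have h : a.+1%:R / n.+1%:R <= 1 :> R by rewrite ler_pdivrMr // mul1r ler_nat.
rewrite (min_idPr h) -mulrBl -natrB // subSnn mul1r.
rewrite (max_idPr _); last by rewrite invr_ge0 ltW.
by rewrite divff // gt_eqF.
Qed.
End U.

Section K.
Context (n : nat) (s1 s2 : {perm 'I_n.+1}).
Definition idx (t : R) : 'I_n.+1 :=
  odflt ord0 [pick i : 'I_n.+1 | `[< Vset n.+1 i t >] ].

Lemma idx_V (i : 'I_n.+1) t : Vset n.+1 i t -> idx t = i.
Proof.
move=> h; rewrite /idx; case: pickP => [j /asboolP hj|/(_ i)] /=.
  by apply: val_inj; exact: Vset_disj hj h.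
by rewrite asboolT.
Qed.

Lemma idx_in t : 0 < t <= 1 -> Vset n.+1 (idx t) t.
Proof.
move=> /(Vset_cover (ltn0Sn n)) [i ilt hi].
by rewrite (idx_V (i := Ordinal ilt)).
Qed.

Lemma idx_out t : ~ (0 < t <= 1) -> idx t = ord0.
Proof.
move=> h; rewrite /idx; case: pickP => [j /asboolP hj|] //=.
exfalso; apply: h; rewrite (Vset_pos hj) /=; exact: Vset_le1 (ltn_ord j) hj.
Qed.

Lemma mS (i : 'I_n.+1) : measurable [set t | idx t = i].
Proof.
have -> : [set t | idx t = i] = Vset n.+1 i `|`
    (if i == ord0 then ~` `]0, 1]%classic else set0).
  apply/seteqP; split => t /=.
    move=> <-; have [h|h] := pselect (0 < t <= 1).
      by left; exact: idx_in.
    by right; rewrite idx_out // eqxx /= in_itv /=; exact/negP.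
  case=> [|]; first exact: idx_V.
  case: ifPn => // /eqP -> /= h; apply: idx_out => h'; apply: h.
  by rewrite in_itv.
apply: measurableU; first exact: mVset.
case: ifPn => _ //; apply: measurableC; exact: measurable_itv.
Qed.

Lemma idx_sum (h : 'I_n.+1 -> \bar R) t :
  h (idx t) = (\sum_(i < n.+1) h i * (\1_[set t | idx t = i] t)%:E)%E.
Proof.
rewrite (bigD1 (idx t)) //= indicE mem_set // mule1 big1 ?adde0 // => i ne.
rewrite indicE memNset ?mule0 //= => hi; by rewrite hi eqxx in ne.
Qed.

Lemma measurable_idx (h : 'I_n.+1 -> \bar R) :
  measurable_fun setT (fun t => h (idx t)).
Proof.
rewrite (_ : (fun t => _) = fun t =>
   (\sum_(i < n.+1) h i * (\1_[set t | idx t = i] t)%:E)%E); last first.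
  by apply/funext => t; exact: idx_sum.
apply: emeasurable_sum => i; apply: measurable_funeM.
apply/measurable_EFinP; exact: measurable_indic (mS i).
Qed.

Definition Pm (i : 'I_n.+1) := (umu n (s1 i) \x umu n (s2 i))%E.
Definition Kf (t : R) : {measure set (R * R)%type -> \bar R} := Pm (idx t).
Lemma Kf_meas U : measurable U -> measurable_fun [set: R] (fun t => Kf t U).
Proof. move=> _; exact: (measurable_idx (fun i => Pm i U)). Qed.
HB.instance Definition _ := isKernel.Build _ _ R (R * R)%type R Kf Kf_meas.
Lemma Kf_prob t : Kf t setT = 1%E.
Proof. exact: probability_setT. Qed.
HB.instance Definition _ := Kernel_isProbability.Build _ _ R (R * R)%type R Kf Kf_prob.


Lemma lam_cellR N a (x : R) : lam (`[0, x] `&` Vset N a) = (cellR N a x)%:E.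
Proof. by rewrite /cellR /lamR /Vset lam_cell ?divr_ge0. Qed.

Definition gfun (u1 u2 : R) (i : 'I_n.+1) : R :=
  n.+1%:R * cellR n.+1 (s1 i) u1 * (n.+1%:R * cellR n.+1 (s2 i) u2).

Lemma Kf_rect (u1 u2 : R) t :
  Kf t (`[0, u1] `*` `[0, u2]) = (gfun u1 u2 (idx t))%:E.
Proof.
rewrite /Kf /Pm /=. rewrite product_measure1E; try exact: measurable_itv.
transitivity ((n.+1%:R * cellR n.+1 (s1 (idx t)) u1)%:E *
   (n.+1%:R * cellR n.+1 (s2 (idx t)) u2)%:E)%E.
  congr (_ * _)%E; exact: umu_Icc.
by rewrite -EFinM.
Qed.

Lemma integral_g (g : 'I_n.+1 -> R) (v : R) : (forall i, 0 <= g i) ->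
  0 <= v <= 1 ->
  (\int[lam]_(t in Icc 0 v) (g (idx t))%:E)%E =
  (\sum_(i < n.+1) g i * cellR n.+1 i v)%:E.
Proof.
move=> g0 /andP[v0 v1].
rewrite /Icc -integral_itv_obnd_cbnd; last first.
  apply: measurable_funTS; exact: (measurable_idx (fun i => (g i)%:E)).
transitivity (\int[lam]_(t in `]0%R, v]%classic) (\sum_(i < n.+1) (g i)%:E * (\1_(Vset n.+1 i) t)%:E))%E.
  apply: eq_integral => t; rewrite inE /= in_itv /= => /andP[t0 tv].
  have tin : 0 < t <= 1 by rewrite t0 (le_trans tv v1).
  rewrite (idx_sum (fun i => (g i)%:E)); apply: eq_bigr => i _.
  congr (_ * _%:E)%E; rewrite !indicE; congr (_%:R).
  have [h|h] := pselect (Vset n.+1 i t).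
    by rewrite (mem_set h) mem_set //= (idx_V h).
  rewrite (memNset h) memNset //= => h'; apply: h; rewrite -h'; exact: idx_in.
rewrite ge0_integral_sum //; last 2 first.
- move=> i; apply: measurable_funeM; apply/measurable_EFinP.
  exact: measurable_indic (mVset n.+1 i).
- by move=> i t _; rewrite mule_ge0 // lee_fin ?g0.
rewrite -sumEFin; apply: eq_bigr => i _.
rewrite ge0_integralZl //; last 2 first.
- apply/measurable_EFinP; exact: measurable_indic (mVset n.+1 i).
- by rewrite lee_fin.
rewrite integral_indic; last exact: mVset.
have -> : Vset n.+1 i `&` `]0, v]%classic = `[0, v] `&` Vset n.+1 i.
  apply/seteqP; split => t /= [h1 h2]; split => //; move: h1 h2;
    rewrite /= !in_itv /=.
  - by move=> h /andP[_ ->]; rewrite (ltW (Vset_pos h)).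
  - by move=> /andP[_ ->] h; rewrite (Vset_pos h).
rewrite EFinM -lam_cellR //.
exact: measurable_itv.
Qed.

End K.

Lemma Ncell1 n a : (a < n.+1)%N -> n.+1%:R * cellR n.+1 a (1 : R) = 1.
Proof. by move=> an; have := umu_Icc1 an; rewrite umu_Icc => -[]. Qed.

Lemma copula2_prod : copula2 (fun x y : R => x * y).
Proof.
split.
- by move=> x _; rewrite mulr0 mul0r.
- by move=> x _; rewrite mulr1 mul1r.
- move=> x1 x2 y1 y2 _ h1 _ _ h2 _.
  have -> : x2 * y2 - x2 * y1 - x1 * y2 + x1 * y1 = (x2 - x1) * (y2 - y1) by ring.
  by rewrite mulr_ge0 // subr_ge0.
Qed.

Lemma gfun_ge0 n (s1 s2 : {perm 'I_n.+1}) u1 u2 i : 0 <= gfun s1 s2 u1 u2 i.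
Proof. by rewrite /gfun !mulr_ge0 // cellR_ge0. Qed.

Lemma main_aux n (s1 s2 : {perm 'I_n.+1}) :
  simplified (@empirical_copula R n.+1 s1 s2).
Proof.
have markov : forall u1 u2 v, 0 <= u1 <= 1 -> 0 <= u2 <= 1 -> 0 <= v <= 1 ->
  (empirical_copula s1 s2 u1 u2 v)%:E =
  (\int[lam]_(t in Icc 0 v) (gfun s1 s2 u1 u2 (idx n t))%:E)%E.
  move=> u1 u2 v _ _ hv; rewrite integral_g //; last by move=> i; exact: gfun_ge0.
  congr (_%:E); rewrite /empirical_copula mulr_sumr; apply: eq_bigr => i _.
  rewrite /gfun; ring.
exists (Kf s1 s2); split.
- move=> u1 u2 v hu1 hu2 hv; rewrite markov //.
  by apply: eq_integral => t _; rewrite /Icc Kf_rect.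
- exists (fun x y : R => x * y); split; first exact: copula2_prod.
  move=> u1 u2 v hu1 hu2 hv; rewrite markov //.
  apply: eq_integral => t _; congr (_%:E).
  rewrite /F13 /F23 !Kf_rect /= /gfun !Ncell1 //; ring.
- apply: aeW => t _; split; apply: continuous_subspaceT.
  + have -> : (fun u => F13 (Kf s1 s2) u t) = (fun u => n.+1%:R *
        ((fun=> 0) \max ((fun u => Num.min u ((s1 (idx n t)).+1%:R / n.+1%:R)) \- (fun=> (s1 (idx n t))%:R / n.+1%:R))) u).
      apply/funext => u; rewrite /F13 Kf_rect /= /gfun Ncell1 // mulr1 cellRE.
      by [].
    move=> x; apply: cvgM; first exact: cvg_cst.
    apply: continuous_max; first exact: cvg_cst.
    apply: cvgB; last exact: cvg_cst.
    exact: (@continuous_min R R (fun u => u) (fun=> (s1 (idx n t)).+1%:R / n.+1%:R) x cvg_id (cvg_cst _)).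
  + have -> : (fun u => F23 (Kf s1 s2) u t) = (fun u => n.+1%:R *
        ((fun=> 0) \max ((fun u => Num.min u ((s2 (idx n t)).+1%:R / n.+1%:R)) \- (fun=> (s2 (idx n t))%:R / n.+1%:R))) u).
      apply/funext => u; rewrite /F23 Kf_rect /= /gfun Ncell1 // mul1r cellRE.
      by [].
    move=> x; apply: cvgM; first exact: cvg_cst.
    apply: continuous_max; first exact: cvg_cst.
    apply: cvgB; last exact: cvg_cst.
    exact: (@continuous_min R R (fun u => u) (fun=> (s2 (idx n t)).+1%:R / n.+1%:R) x cvg_id (cvg_cst _)).
Qed.

Theorem theorem3p6' (n : nat) (s1 s2 : {perm 'I_n}) :
  (0 < n)%N -> simplified (@empirical_copula R n s1 s2).
Proof. by case: n s1 s2 => [//|n] s1 s2 _; exact: main_aux. Qed.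
End S.

Theorem theorem3p6 (R : realType) (n : nat) (s1 s2 : {perm 'I_n}) :
  (0 < n)%N -> simplified (@empirical_copula R n s1 s2).
Proof. exact: theorem3p6'. Qed.
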